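(* For all nonnegative integers $a,b,c$ with $a+b+c=d+1$, the following equalities hold in $\mathcal{B}_d$: $$f^{(a)}\binom{H_2}{b}e^{(c)}=\sum_{k=1}^{\min(a,c)}(-1)^{k-1}\binom{b+k}{k}f^{(a-k)}\binom{H_2}{b+k}e^{(c-k)},$$ $$e^{(a)}\binom{H_1}{b}f^{(c)}=\sum_{k=1}^{\min(a,c)}(-1)^{k-1}\binom{b+k}{k}e^{(a-k)}\binom{H_1}{b+k}f^{(c-k)}$$ (an empty sum being $0$).
   Context: Fix an integer $d\ge 0$. $\mathcal{B}_d$ is the associative $\mathbb{Q}$-algebra with $1$ generated by $e,f,H_1,H_2$ subject to the relations $H_1H_2=H_2H_1$, $H_1e-eH_1=e$, $H_1f-fH_1=-f$, $H_2e-eH_2=-e$, $H_2f-fH_2=f$, $ef-fe=H_1-H_2$, $H_1+H_2=d$, and $H_1(H_1-1)\cdots(H_1-d)=0$. For an element $T$ and integer $m\ge 0$, $T^{(m)}=T^m/m!$ and $\binom{T}{m}=T(T-1)\cdots(T-m+1)/m!$; both are defined to be $0$ for negative $m$. *)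

(* Defs.v *)
From mathcomp Require Import all_boot all_order all_algebra.
Set Implicit Arguments. Unset Strict Implicit. Unset Printing Implicit Defensive.
Import GRing.Theory.
Local Open Scope ring_scope.

Definition dpow (A : algType rat) (T : A) (m : nat) : A :=
  (m`!%:R)^-1 *: T ^+ m.

Definition abinom (A : algType rat) (T : A) (m : nat) : A :=
  (m`!%:R)^-1 *: \prod_(i < m) (T - i%:R).

(* The defining relations of B_d, for elements e f H1 H2 of a Q-algebra A.
   B_d is the universal Q-algebra generated by such elements. *)
Definition Bd_relations (d : nat) (A : algType rat) (e f H1 H2 : A) : Prop :=
  H1 * H2 = H2 * H1 /\
  H1 * e - e * H1 = e /\
  H1 * f - f * H1 = - f /\
  H2 * e - e * H2 = - e /\
  H2 * f - f * H2 = f /\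
  e * f - f * e = H1 - H2 /\
  H1 + H2 = d%:R /\
  \prod_(i < d.+1) (H1 - i%:R) = 0.

(* Main.v *)
Require Import Defs.
From mathcomp Require Import all_boot all_order all_algebra.
From mathcomp Require Import ring zify.
Import GRing.Theory Num.Theory.
Local Open Scope ring_scope.
Set Implicit Arguments. Unset Strict Implicit. Unset Printing Implicit Defensive.

Definition dq (A : algType rat) (z : A) (a k : nat) : A :=
  if (k <= a)%N then dpow z (a - k) else 0.
Definition Pr (A : algType rat) (K : A) (i n : nat) : A :=
  \prod_(r < n) (K - (i + r)%:R).
Definition Sb (A : algType rat) (x y K : A) (a b c : nat) : A :=
  \sum_(k < a.+1) ((-1) ^+ k * ('C(b + k, k))%:R) *:
     (dq x a k * abinom K (b + k) * dq y c k).

Lemma fact_neq0 (n : nat) : (n`!%:R : rat) != 0.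
Proof. by rewrite pnatr_eq0 -lt0n fact_gt0. Qed.

Lemma nat_neq0 (n : nat) : (n.+1%:R : rat) != 0.
Proof. by rewrite pnatr_eq0. Qed.

Ltac evpoly u E :=
  let H := fresh "H" in
  have H := congr1 (horner_alg u) E;
  rewrite ?(rmorph_nat, rmorphM, rmorphB, rmorphD, rmorphN) in H;
  rewrite -[u](horner_algX u); exact: H.

Section Generic.
Variable A : algType rat.
Implicit Types (x y z K Z : A).

Lemma comm_prod n z (F G : 'I_n -> A) :
  (forall r, z * F r = G r * z) ->
  z * \prod_(r < n) F r = \prod_(r < n) G r * z.
Proof.
elim: n F G => [|n IH] F G H; first by rewrite !big_ord0 mul1r mulr1.
by rewrite !big_ord_recr /= mulrA (IH _ (fun r => G (widen_ord (leqnSn n) r))) // -mulrA H mulrA.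
Qed.

Lemma comm_prod' n z (F G : 'I_n -> A) :
  (forall r, F r * z = z * G r) ->
  \prod_(r < n) F r * z = z * \prod_(r < n) G r.
Proof.
elim: n F G => [|n IH] F G H; first by rewrite !big_ord0 mul1r mulr1.
by rewrite !big_ord_recr /= -mulrA H mulrA (IH _ (fun r => G (widen_ord (leqnSn n) r))) // mulrA.
Qed.

Lemma abinomE K k : abinom K k = (k`!%:R)^-1 *: Pr K 0 k.
Proof. by rewrite /abinom /Pr; congr (_ *: _); apply: eq_bigr => i _; rewrite add0n. Qed.

Lemma Pr_split K i n m : Pr K i (n + m) = Pr K i n * Pr K (i + n) m.
Proof.
rewrite /Pr big_split_ord /=; congr (_ * _); apply: eq_bigr => r _ //=.
by rewrite addnA.
Qed.

Lemma Pr_split0 K n m : Pr K 0 n * Pr K n m = Pr K 0 (n + m).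
Proof. by rewrite Pr_split add0n. Qed.

Lemma Pr_recr K i n : Pr K i n.+1 = Pr K i n * (K - (i + n)%:R).
Proof. by rewrite /Pr big_ord_recr. Qed.

Lemma Pr0 K i : Pr K i 0 = 1.
Proof. by rewrite /Pr big_ord0. Qed.

Lemma comm_K_Pr K i n : GRing.comm K (Pr K i n).
Proof.
apply: commr_prod => r _ /=; apply: commrB; [exact: commr_refl | exact: commr_nat].
Qed.

Lemma Pr_comm K i n j m : Pr K i n * Pr K j m = Pr K j m * Pr K i n.
Proof.
have H : GRing.comm (Pr K i n) (Pr K j m).
  rewrite [Pr K j m]/Pr; apply: commr_prod => r _ /=.
  apply: commrB; [exact/commr_sym/comm_K_Pr | exact: commr_nat].
exact: H.
Qed.

Lemma dpow0 z : dpow z 0 = 1.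
Proof. by rewrite /dpow fact0 expr0 invr1 scale1r. Qed.

Lemma dpowSr z m : dpow z m * z = m.+1%:R *: dpow z m.+1.
Proof.
rewrite /dpow -scalerAl -exprSr scalerA factS natrM invfM mulrA mulfV ?mul1r //.
exact: nat_neq0.
Qed.

Lemma dpowSl z m : z * dpow z m = m.+1%:R *: dpow z m.+1.
Proof. by rewrite -dpowSr /dpow -scalerAl -scalerAr -exprSr -exprS. Qed.

Lemma dq_gt z a k : (a < k)%N -> dq z a k = 0.
Proof. by move=> h; rewrite /dq leqNgt h. Qed.

Lemma dq_le z a k : (k <= a)%N -> dq z a k = dpow z (a - k).
Proof. by rewrite /dq => ->. Qed.

Lemma dqSS z a k : dq z a.+1 k.+1 = dq z a k.
Proof. by rewrite /dq ltnS subSS. Qed.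

Lemma dq0S z k : dq z 0 k.+1 = 0.
Proof. by rewrite dq_gt. Qed.

Lemma dq_0 z a : dq z a 0 = dpow z a.
Proof. by rewrite dq_le // subn0. Qed.

Lemma dqSr z c k : dq z c k * z = (c.+1 - k)%:R *: dq z c.+1 k.
Proof.
rewrite /dq; case: (leqP k c) => hk.
  by rewrite (leq_trans hk) // dpowSr subSn.
rewrite mul0r; case: (leqP k c.+1) => hk2; last by rewrite scaler0.
have -> : k = c.+1 by apply/eqP; rewrite eqn_leq hk2.
by rewrite subnn scale0r.
Qed.

Lemma dpow_comm z m : z * dpow z m = dpow z m * z.
Proof. by rewrite dpowSl dpowSr. Qed.

Lemma dqSl z c k : z * dq z c k = (c.+1 - k)%:R *: dq z c.+1 k.
Proof.
rewrite -dqSr /dq; case: ifP => _; last by rewrite mulr0 mul0r.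
exact: dpow_comm.
Qed.

Lemma abinom0 K : abinom K 0 = 1.
Proof. by rewrite /abinom big_ord0 fact0 invr1 scale1r. Qed.

Lemma Sb_c0 x y K a : Sb x y K a 0 0 = dpow x a.
Proof.
rewrite /Sb big_ord_recl /= big1 ?addr0.
  by rewrite expr0 mul1r bin0 scale1r dq_0 dq_0 dpow0 abinom0 !mulr1.
by move=> i _; rewrite dq0S mulr0 scaler0.
Qed.

Lemma Sb_a0 x y K c : Sb x y K 0 0 c = dpow y c.
Proof.
by rewrite /Sb big_ord1 /= expr0 mul1r bin0 scale1r dq_0 dq_0 dpow0 abinom0 !mul1r.
Qed.

Lemma eigR Z K (c : rat) i n : Z * K = c *: Z ->
  Z * Pr K i n = (\prod_(r < n) (c - (i + r)%:R)) *: Z.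
Proof.
move=> H; elim: n => [|n IH]; first by rewrite Pr0 big_ord0 scale1r mulr1.
rewrite Pr_recr big_ord_recr /= mulrA IH -scalerAl mulrBr H -scalerA.
by rewrite mulr_natr -scaler_nat -scalerBl.
Qed.

Lemma eigL Z K (c : rat) i n : K * Z = c *: Z ->
  Pr K i n * Z = (\prod_(r < n) (c - (i + r)%:R)) *: Z.
Proof.
move=> H; elim: n => [|n IH]; first by rewrite Pr0 big_ord0 scale1r mul1r.
rewrite Pr_recr big_ord_recr /= -mulrA mulrBl H mulr_natl -scaler_nat -scalerBl.
by rewrite -scalerAr IH scalerA mulrC.
Qed.

Lemma comm_KB_Pr K c i n : GRing.comm (K - c%:R) (Pr K i n).
Proof.
apply/commr_sym; apply: commrB; [exact/commr_sym/comm_K_Pr | exact: commr_nat].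
Qed.

Lemma coprime_Pr Z K i n j m :
  Z * Pr K i n = 0 -> Z * Pr K j m = 0 -> (i + n <= j)%N -> Z = 0.
Proof.
elim: n Z => [|n IH] Z h1 h2 hij; first by move: h1; rewrite Pr0 mulr1.
have hZ : Z * (K - (i + n)%:R) = 0.
  apply: (IH).
  - by rewrite -mulrA comm_KB_Pr -Pr_recr.
  - by rewrite -mulrA comm_KB_Pr mulrA h2 mul0r.
  - by apply: leq_trans hij; rewrite leq_add2l.
have hK : Z * K = (i + n)%:R *: Z.
  by apply/eqP; rewrite scaler_nat -mulr_natr -subr_eq0 -mulrBr hZ.
have Hne : \prod_(r < m) ((i + n)%:R - (j + r)%:R) != 0 :> rat.
  apply/prodf_neq0 => r _.
  rewrite subr_eq0 eqr_nat; apply/negP => /eqP E.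
  by move: hij; rewrite addnS E ltnNge leq_addr.
move: h2; rewrite (eigR _ _ hK) => /eqP; rewrite scaler_eq0 (negbTE Hne) /=.
by move/eqP.
Qed.

Lemma abinom_rec K n : abinom K n * (K - n%:R) = n.+1%:R *: abinom K n.+1.
Proof.
rewrite !abinomE -scalerAl Pr_recr add0n scalerA factS natrM invfM mulrA.
by rewrite mulfV ?nat_neq0 // mul1r.
Qed.

Lemma fact_inv_rec n : (n.+1%:R * (n.+1)`!%:R^-1 : rat) = (n`!%:R)^-1.
Proof. by rewrite factS natrM invfM mulrA mulfV ?nat_neq0 // mul1r. Qed.

Lemma binC_rec b k : ('C(b + k, k) * (b + k).+1 = b.+1 * 'C(b.+1 + k, k))%N.
Proof.
rewrite mulnC; have := mul_bin_down (b + k).+1 k => /= ->.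
by rewrite addSn; congr (_ * _)%N; lia.
Qed.

Lemma lin_id1 (u : A) (m : nat) :
  u + m.+1%:R * (u - m.+2%:R) = m.+2%:R * (u - m.+1%:R).
Proof.
have E : ('X + m.+1%:R * ('X - m.+2%:R) = m.+2%:R * ('X - m.+1%:R) :> {poly rat})
  by ring.
evpoly u E.
Qed.

Lemma abinom_pascal K k :
  abinom (K + 1) k.+1 = abinom K k.+1 + abinom K k.
Proof.
set Q := \prod_(i < k) (K - i%:R).
have h1 : \prod_(i < k) (K + 1 - (bump 0 i)%:R) = Q.
  by apply: eq_bigr => i _; rewrite /bump /= add1n -natr1 opprD addrA addrAC addrK.
rewrite /abinom big_ord_recl big_ord_recr /= subr0 h1 -/Q.
rewrite -(fact_inv_rec k) [_ / _]mulrC -scalerA -scalerDr; congr (_ *: _).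
have -> : (K + 1) * Q = Q * (K + 1).
  apply: commr_prod => i _ /=; apply: commrB; last exact: commr_nat.
  by apply/commr_sym; apply: commrD; [exact: commr_refl | exact: commr1].
rewrite scaler_nat -[Q *+ _]mulr_natr -mulrDr; congr (_ * _).
by rewrite -natr1 addrA subrK.
Qed.

Lemma scale_nat_mul (n : nat) (v : A) : n%:R *: v = n%:R * v.
Proof. by rewrite scaler_nat mulr_natl. Qed.

Lemma abinom_shift M z k : M * z = z * (M + 1) ->
  abinom M k * z = z * abinom (M + 1) k.
Proof.
move=> H; rewrite /abinom -scalerAl -scalerAr; congr (_ *: _).
apply: comm_prod' => i; rewrite mulrBl H mulrBr; congr (_ - _).
exact/commr_sym/commr_nat.
Qed.

Lemma SbE x y K n m : Sb x y K n 0 m =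
  \sum_(k < n.+1) (-1) ^+ k *: (dq x n k * abinom K k * dq y m k).
Proof. by apply: eq_bigr => k _; rewrite !add0n binn mulr1. Qed.

Lemma lin_id2 (a c j d : nat) (u : A) : (j <= c)%N ->
  (c - j)%:R + (d%:R - 2%:R * u - a.+1%:R + j.+1%:R) = d%:R - 2%:R * u - a%:R + c%:R.
Proof.
move=> h.
have E : ((c - j)%:R + (d%:R - 2%:R * 'X - a.+1%:R + j.+1%:R) =
          d%:R - 2%:R * 'X - a%:R + c%:R :> {poly rat}) by rewrite natrB //; ring.
evpoly u E.
Qed.

Lemma lin_id3 (a c d : nat) (u : A) :
  u - c%:R + (d%:R - 2%:R * u - a%:R + c%:R) = d%:R - u - a%:R.
Proof.
have E : ('X - c%:R + (d%:R - 2%:R * 'X - a%:R + c%:R) =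
          d%:R - 'X - a%:R :> {poly rat}) by ring.
evpoly u E.
Qed.

End Generic.
Section Rel.
Variables (d : nat) (A : algType rat) (x y K : A).
Hypothesis Hx : K * x = x * (K + 1).
Hypothesis Hy : K * y = y * (K - 1).
Hypothesis Hc : y * x - x * y = d%:R - 2%:R * K.
Hypothesis Hp : \prod_(i < d.+1) (K - i%:R) = 0.

Lemma xK : x * K = (K - 1) * x.
Proof. by rewrite mulrBl mul1r Hx mulrDr mulr1 addrK. Qed.

Lemma yK : y * K = (K + 1) * y.
Proof. by rewrite mulrDl mul1r Hy mulrBr mulr1 subrK. Qed.

Lemma xpK m : x ^+ m * K = (K - m%:R) * x ^+ m.
Proof.
elim: m => [|m IH]; first by rewrite expr0 mul1r mulr1 subr0.
rewrite exprSr -mulrA xK mulrA mulrBr mulr1 IH -[X in _ - X]mul1r -mulrBl.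
rewrite -mulrA -exprSr.
by rewrite -addrA -opprD natr1.
Qed.

Lemma ypK m : y ^+ m * K = (K + m%:R) * y ^+ m.
Proof.
elim: m => [|m IH]; first by rewrite expr0 mul1r mulr1 addr0.
rewrite exprSr -mulrA yK mulrA mulrDr mulr1 IH -[X in _ + X]mul1r -mulrDl.
by rewrite -mulrA -exprSr -addrA natr1.
Qed.

Lemma dpx_K m c : dpow x m * (K - c%:R) = (K - (c + m)%:R) * dpow x m.
Proof.
rewrite /dpow -scalerAl -scalerAr mulrBr xpK mulr_natr -(mulr_natl (x ^+ m) c).
by rewrite -mulrBl natrD opprD addrAC addrA.
Qed.

Lemma dpy_K m c : dpow y m * (K - (c + m)%:R) = (K - c%:R) * dpow y m.
Proof.
rewrite /dpow -scalerAl -scalerAr mulrBr ypK mulr_natr -(mulr_natl (y ^+ m)) -mulrBl.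
by rewrite natrD opprD addrA addrAC addrK.
Qed.

Lemma dpx_Pr m i n : dpow x m * Pr K i n = Pr K (i + m) n * dpow x m.
Proof.
rewrite /Pr; apply: comm_prod => r; rewrite dpx_K; congr ((K - _%:R) * _).
by rewrite addnAC.
Qed.

Lemma dpy_Pr m i n : dpow y m * Pr K (i + m) n = Pr K i n * dpow y m.
Proof.
rewrite /Pr; apply: comm_prod => r; rewrite -dpy_K; congr (_ * (K - _%:R)).
by rewrite addnAC.
Qed.

Lemma Pr_y i n : Pr K i n * y = y * Pr K i.+1 n.
Proof.
rewrite /Pr; apply: comm_prod' => r; rewrite mulrBl Hy mulr_natl -mulr_natr -mulrBr.
rewrite addSn -natr1 opprD addrA.
by rewrite addrAC.
Qed.

Lemma Hp' : Pr K 0 d.+1 = 0.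
Proof. by rewrite -Hp /Pr; apply: eq_bigr => r _; rewrite add0n. Qed.

Lemma ykill m : (m <= d.+1)%N -> Pr K 0 (d.+1 - m) * y ^+ m = 0.
Proof.
elim: m => [|m IH] hm; first by rewrite subn0 expr0 mulr1 Hp'.
have hm' : (m <= d.+1)%N by exact: ltnW.
have IH' := IH hm'.
rewrite subSS in hm *; rewrite subSn in IH'; last by [].
move: IH'; rewrite -add1n Pr_split add0n.
have -> : Pr K 0 1 = K by rewrite /Pr big_ord1 addn0 subr0.
move=> KW.
set W := Pr K 1 (d - m) * y ^+ m.
have HW : K * (y * W) = (-1) *: (y * W).
  have KW' : K * W = 0 by rewrite /W mulrA.
  by rewrite mulrA Hy -mulrA mulrBl mul1r KW' sub0r mulrN scaleN1r.
have := eigL 0 d.+1 HW; rewrite Hp' mul0r => /eqP; rewrite eq_sym scaler_eq0.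
have Hne : \prod_(r < d.+1) (-1 - (0 + r)%:R) != 0 :> rat.
  apply/prodf_neq0 => r _; rewrite add0n -opprD nat1r oppr_eq0 pnatr_eq0 //.
rewrite (negbTE Hne) /= => /eqP.
by rewrite exprS /W mulrA -Pr_y -mulrA.
Qed.

Lemma V1 a c : (c <= d.+1)%N -> Sb x y K a 0 c * Pr K c (d.+1 - c) = 0.
Proof.
move=> hc; rewrite /Sb mulr_suml big1 // => k _.
rewrite -scalerAl add0n.
suff -> : dq x a k * abinom K k * dq y c k * Pr K c (d.+1 - c) = 0 by rewrite scaler0.
case: (leqP k c) => hk; last by rewrite (dq_gt _ hk) mulr0 mul0r.
rewrite (dq_le _ hk).
have hc' : c = (k + (c - k))%N by rewrite subnKC.
rewrite [in Pr K c _]hc' -!mulrA dpy_Pr [abinom K k * _]mulrA abinomE -scalerAl Pr_split0.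
have -> : (k + (d.+1 - (k + (c - k))) = d.+1 - (c - k))%N by lia.
rewrite -scalerAl /dpow -!scalerAr ykill ?scaler0 ?mulr0 //; last by lia.
by rewrite !scaler0.
Qed.

Lemma dqy_K b c k : dq y c k * (K - (b + c)%:R) = (K - (b + k)%:R) * dq y c k.
Proof.
case: (leqP k c) => hk; last by rewrite (dq_gt _ hk) mul0r mulr0.
rewrite (dq_le _ hk) -dpy_K; congr (_ * (K - _%:R)); lia.
Qed.

Lemma R1 a b c :
  Sb x y K a b c * (K - (b + c)%:R) = b.+1%:R *: Sb x y K a b.+1 c.
Proof.
rewrite /Sb mulr_suml scaler_sumr; apply: eq_bigr => k _.
rewrite -scalerAl -!mulrA dqy_K [abinom K (b + k) * _]mulrA abinom_rec.
rewrite -scalerAl -scalerAr scalerA scalerA addSn !mulrA; congr (_ *: _).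
by rewrite -[LHS]mulrA -natrM binC_rec addSn natrM mulrCA mulrA.
Qed.

Lemma S1 a b c :
  Sb x y K a b c = Sb x y K a 0 c * ((b`!%:R)^-1 *: Pr K c b).
Proof.
elim: b => [|b IH]; first by rewrite fact0 invr1 scale1r Pr0 mulr1.
apply: (scalerI (nat_neq0 b)); rewrite -R1 IH scalerAr scalerA fact_inv_rec.
by rewrite -mulrA; congr (_ * _); rewrite -scalerAl Pr_recr addnC.
Qed.

Lemma dqy_K0 c k : dq y c k * (K - c%:R) = (K - k%:R) * dq y c k.
Proof. by have := dqy_K 0 c k; rewrite !add0n. Qed.

Lemma RU a c :
  c.+1%:R *: Sb x y K a.+1 0 c.+1 - Sb x y K a.+1 0 c * y =
  - (Sb x y K a 0 c * (K - c%:R)).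
Proof.
rewrite /Sb mulr_suml scaler_sumr -sumrB.
under eq_bigr => k _.
  have -> : c.+1%:R *: (((-1) ^+ k * 'C(0 + k, k)%:R) *:
              (dq x a.+1 k * abinom K (0 + k) * dq y c.+1 k)) -
            ((-1) ^+ k * 'C(0 + k, k)%:R) *:
              (dq x a.+1 k * abinom K (0 + k) * dq y c k) * y =
            ((-1) ^+ k * 'C(0 + k, k)%:R * k%:R) *:
              (dq x a.+1 k * abinom K (0 + k) * dq y c.+1 k).
    rewrite -scalerAl -[(_ * dq y c k) * y]mulrA dqSr.
    rewrite -[_ * ((c.+1 - k)%:R *: _)]scalerAr scalerA scalerA -scalerBl.
    case: (leqP k c.+1) => hk; last by rewrite (dq_gt _ hk) !mulr0 !scaler0.
    by congr (_ *: _); rewrite natrB //; ring.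
  over.
rewrite big_ord_recl /= mulr0 scale0r add0r mulr_suml -sumrN.
apply: eq_bigr => j _; rewrite /bump /= add1n !add0n !dqSS !binn.
rewrite -scalerAl -!mulrA dqy_K0 [abinom K j * _]mulrA abinom_rec.
rewrite -[(_ *: abinom K j.+1) * _]scalerAl -[dq x a j * (_ *: _)]scalerAr.
rewrite scalerA -scaleNr !mulrA; congr (_ *: _).
by rewrite exprS; ring.
Qed.

Lemma hx : (d%:R - 2%:R * K) * x = x * (d%:R - 2%:R * K - 2%:R).
Proof.
rewrite mulrBl -mulrA Hx -(commr_nat x d) mulrA -(commr_nat x 2) -mulrA -mulrBr.
by congr (_ * _); rewrite mulrDr mulr1 opprD addrA.
Qed.

Lemma hmx m : (d%:R - 2%:R * K - m%:R) * x = x * (d%:R - 2%:R * K - m.+2%:R).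
Proof.
rewrite mulrBl hx -(commr_nat x m) -mulrBr; congr (_ * _).
by rewrite -addrA -opprD -natrD add2n.
Qed.

Lemma D3pow m : y * x ^+ m.+1 =
  x ^+ m.+1 * y + m.+1%:R *: (x ^+ m * (d%:R - 2%:R * K - m%:R)).
Proof.
elim: m => [|m IH].
  by rewrite expr1 expr0 mul1r subr0 scale1r -Hc addrC subrK.
rewrite exprSr mulrA IH mulrDl -mulrA.
have -> : y * x = x * y + (d%:R - 2%:R * K) by rewrite -Hc addrC subrK.
rewrite -scalerAl -[x ^+ m * _ * x]mulrA hmx [x ^+ m * (x * _)]mulrA -exprSr.
rewrite mulrDr -addrA.
congr (_ + _); first by rewrite mulrA.
rewrite !scalerAr -mulrDr; congr (_ * _).
by rewrite !scale_nat_mul lin_id1.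
Qed.

Lemma D3d m : y * dpow x m.+1 =
  dpow x m.+1 * y + dpow x m * (d%:R - 2%:R * K - m%:R).
Proof.
rewrite /dpow -scalerAr D3pow scalerDr scalerA [_ * m.+1%:R]mulrC fact_inv_rec.
by rewrite !scalerAl.
Qed.

Lemma dqx_y a k : dq x a k * y =
  y * dq x a k - dq x a k.+1 * (d%:R - 2%:R * K - a%:R + k.+1%:R).
Proof.
case: (ltnP k a) => hk.
  rewrite (dq_le _ (ltnW hk)) (dq_le _ hk) -(subnSK hk) D3d.
  by rewrite natrB // opprB addrA addrAC addrK.
case: (eqVneq k a) => [->|hne].
  by rewrite (dq_gt _ (ltnSn a)) mul0r subr0 dq_le // subnn dpow0 mulr1 mul1r.
have hk' : (a < k)%N by rewrite ltn_neqAle eq_sym hne.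
by rewrite !dq_gt // ?mul0r ?mulr0 ?subr0 //; apply: ltnW.
Qed.

Lemma Ly : (d%:R - K) * y = y * (d%:R - K + 1).
Proof.
rewrite mulrBl Hy -(commr_nat y d) -mulrBr; congr (_ * _).
by rewrite opprB addrA addrAC.
Qed.

Lemma dqx_L a j : dq x a j * (d%:R - K - a%:R) = (d%:R - K - j%:R) * dq x a j.
Proof.
case: (leqP j a) => hj; last by rewrite dq_gt // mul0r mulr0.
rewrite dq_le // /dpow -scalerAl -scalerAr; congr (_ *: _).
rewrite !mulrBr xpK !(commr_nat (x ^+ _)) -!mulrBl; congr (_ * _).
have E : (d%:R - ('X - (a - j)%:R) - a%:R = d%:R - 'X - j%:R :> {poly rat}).
  by rewrite natrB //; ring.
evpoly K E.
Qed.

Lemma RT a c :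
  c.+1%:R *: Sb y x (d%:R - K) c.+1 0 a.+1 - y * Sb y x (d%:R - K) c 0 a.+1 =
  - (Sb y x (d%:R - K) c 0 a * (d%:R - K - a%:R)).
Proof.
rewrite /Sb.
set L := d%:R - K.
have -> : \sum_(k < c.+1) ((-1) ^+ k * 'C(0 + k, k)%:R) *:
            (dq y c k * abinom L (0 + k) * dq x a.+1 k) =
          \sum_(k < c.+2) ((-1) ^+ k * 'C(0 + k, k)%:R) *:
            (dq y c k * abinom L (0 + k) * dq x a.+1 k).
  by rewrite [RHS]big_ord_recr /= (dq_gt _ (ltnSn c)) !mul0r scaler0 addr0.
rewrite mulr_sumr scaler_sumr -sumrB.
under eq_bigr => k _.
  have -> : c.+1%:R *: (((-1) ^+ k * 'C(0 + k, k)%:R) *: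
              (dq y c.+1 k * abinom L (0 + k) * dq x a.+1 k)) -
            y * (((-1) ^+ k * 'C(0 + k, k)%:R) *:
              (dq y c k * abinom L (0 + k) * dq x a.+1 k)) =
            ((-1) ^+ k * 'C(0 + k, k)%:R * k%:R) *:
              (dq y c.+1 k * abinom L (0 + k) * dq x a.+1 k).
    rewrite -[y * (_ *: _)]scalerAr !mulrA dqSl -[(_ *: dq y c.+1 k) * _]scalerAl.
    rewrite -[(_ *: (_ * abinom _ _)) * _]scalerAl scalerA scalerA -scalerBl.
    case: (leqP k c.+1) => hk; last by rewrite (dq_gt _ hk) !mul0r !scaler0.
    by congr (_ *: _); rewrite natrB //; ring.
  over.
rewrite big_ord_recl /= mulr0 scale0r add0r mulr_suml -sumrN.
apply: eq_bigr => j _; rewrite /bump /= add1n !add0n !dqSS !binn.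
rewrite -scalerAl -!mulrA dqx_L [abinom L j * _]mulrA abinom_rec.
rewrite -[(_ *: abinom L j.+1) * _]scalerAl -[dq y c j * (_ *: _)]scalerAr.
rewrite scalerA -scaleNr; congr (_ *: _).
by rewrite exprS; ring.
Qed.

Lemma TC a c :
  Sb y x (d%:R - K) c 0 a.+1 * y - y * Sb y x (d%:R - K) c 0 a.+1 =
  - (Sb y x (d%:R - K) c 0 a * (d%:R - 2%:R * K - a%:R + c%:R)).
Proof.
rewrite !SbE mulr_suml mulr_sumr -sumrB.
set L := d%:R - K.
pose V j := dq y c j * abinom L j * dq x a j.
pose F (k : nat) := (c.+1 - k)%:R *:
   (dq y c.+1 k * (abinom (L + 1) k - abinom L k) * dq x a.+1 k).
pose G (k : nat) := V k * (d%:R - 2%:R * K - a.+1%:R + k.+1%:R).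
transitivity (\sum_(k < c.+1) (-1) ^+ k *: F k - \sum_(k < c.+1) (-1) ^+ k *: G k).
  rewrite -sumrB; apply: eq_bigr => k _.
  rewrite -[(_ *: _) * y]scalerAl -[y * (_ *: _)]scalerAr -!scalerBr.
  congr (_ *: _).
  rewrite -[_ * dq x a.+1 k * y]mulrA dqx_y mulrBr !mulrA dqSS.
  rewrite -[dq y c k * abinom L k * y]mulrA.
  rewrite (abinom_shift _ Ly) mulrA dqSr dqSl /F /G /V.
  rewrite mulrBr mulrBl scalerBr -!scalerAl addrAC //.
have HF : \sum_(k < c.+1) (-1) ^+ k *: F k =
          \sum_(j < c.+1) (-1) ^+ j.+1 *: ((c - j)%:R *: V j).
  rewrite big_ord_recl [RHS]big_ord_recr /= /F !abinom0 subrr mulr0 mul0r.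
  rewrite !scaler0 add0r subnn scale0r scaler0 addr0.
  apply: eq_bigr => j _; rewrite /bump /= add1n subSS abinom_pascal.
  by rewrite [abinom L j.+1 + _]addrC addrK !dqSS.
rewrite HF -sumrB mulr_suml -sumrN; apply: eq_bigr => j _.
rewrite exprS mulN1r scaleNr -opprD -scalerDr -scalerAl; congr (- (_ *: _)).
rewrite /G scale_nat_mul -(commr_nat (V j)) -mulrDr; congr (V j * _).
by apply: lin_id2; rewrite -ltnS ltn_ord.
Qed.

Lemma UT a c : Sb x y K a 0 c = Sb y x (d%:R - K) c 0 a.
Proof.
elim: c a => [|c IH] a; first by rewrite Sb_c0 Sb_a0.
case: a => [|a]; first by rewrite Sb_a0 Sb_c0.
apply: (scalerI (nat_neq0 c)).
have HU := RU a c; move/eqP: HU; rewrite subr_eq => /eqP ->.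
have HT := RT a c; move/eqP: HT; rewrite subr_eq => /eqP ->.
have HC := TC a c; move/eqP: HC; rewrite subr_eq => /eqP HC.
rewrite !IH HC addrA; congr (_ + _); rewrite -opprD -mulrDr; congr (- (_ * _)).
exact: lin_id3.
Qed.

End Rel.

Lemma rev_poly (d a : nat) : (a <= d.+1)%N ->
  \prod_(r < d.+1 - a) (d%:R - 'X - (a + r)%:R) =
  (-1) ^+ (d.+1 - a) * \prod_(r < d.+1 - a) ('X - (0 + r)%:R) :> {poly rat}.
Proof.
move=> ha; rewrite -(big_mkord xpredT (fun r => d%:R - 'X - (a + r)%N%:R)).
rewrite -(big_mkord xpredT (fun r => 'X - (0 + r)%N%:R)) (big_nat_rev _ _ 0).
have -> : (-1) ^+ (d.+1 - a) = \prod_(0 <= i < d.+1 - a) (-1 : {poly rat}).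
  by rewrite prodr_const_nat subn0.
rewrite -big_split /=.
apply: eq_big_nat => r /andP [_ hr].
have -> : (a + (0 + (d.+1 - a) - r.+1) = d - r)%N by lia.
rewrite add0n natrB; last by lia.
by rewrite mulN1r opprB opprB addrC addrA subrK.
Qed.

Lemma rev_prod (A : algType rat) (K : A) (d a : nat) : (a <= d.+1)%N ->
  Pr (d%:R - K) a (d.+1 - a) = (-1) ^+ (d.+1 - a) * Pr K 0 (d.+1 - a).
Proof.
move=> ha; have := congr1 (horner_alg K) (rev_poly ha).
rewrite rmorphM rmorphXn rmorphN rmorph1 !rmorph_prod /Pr => H.
transitivity (\prod_(r < d.+1 - a) horner_alg K (d%:R - 'X - (a + r)%N%:R)).
  apply: eq_bigr => r _; rewrite !(rmorph_nat, rmorphB).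
  by rewrite -[K in LHS](horner_algX K); reflexivity.
rewrite H; congr (_ * _); apply: eq_bigr => r _; rewrite !(rmorph_nat, rmorphB).
by rewrite -[K in RHS](horner_algX K); reflexivity.
Qed.

Lemma swap_rel d (A : algType rat) (x y K : A) :
  K * x = x * (K + 1) -> K * y = y * (K - 1) ->
  y * x - x * y = d%:R - 2%:R * K -> \prod_(i < d.+1) (K - i%:R) = 0 ->
  [/\ (d%:R - K) * y = y * ((d%:R - K) + 1),
      (d%:R - K) * x = x * ((d%:R - K) - 1),
      x * y - y * x = d%:R - 2%:R * (d%:R - K) &
      \prod_(i < d.+1) ((d%:R - K) - i%:R) = 0].
Proof.
move=> Hx Hy Hc Hp; split.
- exact: Ly.
- rewrite mulrBl Hx -(commr_nat x d) -mulrBr; congr (_ * _).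
  by rewrite opprD addrA.
- rewrite -opprB Hc.
  have E : (- (d%:R - 2%:R * 'X) = d%:R - 2%:R * (d%:R - 'X) :> {poly rat}) by ring.
  evpoly K E.
- have := rev_prod K (leq0n d.+1); rewrite subn0 (Hp' Hp) mulr0 => E.
  by rewrite -E /Pr; apply: eq_bigr => i _; rewrite add0n.
Qed.

Lemma core d (A : algType rat) (x y K : A) :
  K * x = x * (K + 1) -> K * y = y * (K - 1) ->
  y * x - x * y = d%:R - 2%:R * K -> \prod_(i < d.+1) (K - i%:R) = 0 ->
  forall a b c, (a + b + c = d.+1)%N -> Sb x y K a b c = 0.
Proof.
move=> Hx Hy Hc Hp a b c habc.
have [Sy Sx Sc Sp] := swap_rel Hx Hy Hc Hp.
rewrite (S1 _ Hy) -scalerAr.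
suff -> : Sb x y K a 0 c * Pr K c b = 0 by rewrite scaler0.
apply: (@coprime_Pr _ _ K 0 c (c + b) a); last by rewrite add0n leq_addr.
- rewrite -mulrA Pr_comm Pr_split0 (UT Hx Hy Hc).
  have ha : (a <= d.+1)%N by lia.
  have V := V1 y Sx Sp c ha.
  rewrite (rev_prod K ha) mulrA (commr_sign _ (d.+1 - a)) -mulrA in V.
  have -> : (c + b = d.+1 - a)%N by lia.
  by rewrite -[LHS](signrMK (d.+1 - a)) V mulr0.
- rewrite -mulrA -Pr_split.
  have hc : (c <= d.+1)%N by lia.
  have -> : (b + a = d.+1 - c)%N by lia.
  have V := V1 x Hy Hp a hc. move: V. set u := Sb _ _ _ _ _ _. by [].
Qed.

Lemma Sb_stmt (A : algType rat) (x y K : A) a b c : Sb x y K a b c = 0 ->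
  dpow x a * abinom K b * dpow y c =
  \sum_(1 <= k < (minn a c).+1)
     ((-1) ^+ (k.-1) * ('C(b + k, k))%:R) *:
       (dpow x (a - k) * abinom K (b + k) * dpow y (c - k)).
Proof.
rewrite /Sb big_ord_recl /= expr0 mul1r addn0 bin0 scale1r !dq_0.
move/eqP; rewrite addr_eq0 => /eqP ->.
rewrite big_add1 /= big_mkord.
rewrite (big_ord_widen a (fun i => ((-1) ^+ i * 'C((b + i.+1)%N, i.+1)%:R) *:
     (dpow x (a - i.+1)%N * abinom K (b + i.+1)%N * dpow y (c - i.+1)%N)) (geq_minl a c)).
rewrite (bigID (fun j : 'I_a => (j < minn a c)%N)) /= [X in _ + X]big1 ?addr0.
  rewrite -sumrN; apply: eq_bigr => j hj.
  move: hj; rewrite leq_min => /andP [hja hjc].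
  rewrite /bump /= add1n !dq_le // exprS mulN1r /= -scaleNr; congr (_ *: _).
  by rewrite mulNr opprK.
move=> j; rewrite -leqNgt geq_min leqNgt ltn_ord /= => hj.
by rewrite /bump /= add1n (dq_gt y) ?mulr0 ?scaler0 // ltnS.
Qed.

Unset Implicit Arguments.

Theorem theorem6p1 (d : nat) (A : algType rat) (e f H1 H2 : A) :
  Bd_relations d e f H1 H2 ->
  forall a b c : nat, (a + b + c = d.+1)%N ->
    dpow f a * abinom H2 b * dpow e c =
      \sum_(1 <= k < (minn a c).+1)
         ((-1) ^+ (k.-1) * ('C(b + k, k))%:R) *:
           (dpow f (a - k) * abinom H2 (b + k) * dpow e (c - k))
  /\
    dpow e a * abinom H1 b * dpow f c =
      \sum_(1 <= k < (minn a c).+1)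
         ((-1) ^+ (k.-1) * ('C(b + k, k))%:R) *:
           (dpow e (a - k) * abinom H1 (b + k) * dpow f (c - k)).
Proof.
move=> [H12 [H1e [H1f [H2e [H2f [Hef [Hsum Hprod]]]]]]] a b c habc.
have Hx : H1 * e = e * (H1 + 1).
  by move/eqP: H1e; rewrite subr_eq mulrDr mulr1 addrC => /eqP.
have Hy : H1 * f = f * (H1 - 1).
  by move/eqP: H1f; rewrite subr_eq mulrBr mulr1 addrC => /eqP.
have HH2 : H2 = d%:R - H1 by rewrite -Hsum addrAC subrr add0r.
have Hc : f * e - e * f = d%:R - 2%:R * H1.
  by rewrite -opprB Hef HH2 opprB mulr2n mulrDl mul1r opprD addrA.
split; last by apply: Sb_stmt; exact: core Hx Hy Hc Hprod a b c habc.
have [Sy Sx Sc Sp] := swap_rel Hx Hy Hc Hprod.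
rewrite HH2; apply: Sb_stmt; exact: core Sy Sx Sc Sp a b c habc.
Qed.
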